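(* Let $\mathbf{h}_1,\mathbf{h}_2\in\mathbb{C}^M$ be linearly independent, $P,\sigma^2>0$, and let $\kappa=\lambda_1/\lambda_2$ and $\theta$ be as in the context. Define $\eta(\kappa,\theta)=10\log_{10}\frac{\mathrm{SNR}_{\rm md}}{\mathrm{SNR}_{\rm zf}}$. Then: (1) if $0<\kappa\le1$ and $0\le\sin\theta\le\kappa$: $\eta=10\log_{10}\frac{1+\sin^2\theta}{(1-\sin\theta)^2}$; (2) if $0<\kappa\le1$ and $\kappa<\sin\theta<1$: $\eta=10\log_{10}\frac{(1+\sin^2\theta)(\kappa+\sin^2\theta)(1+1/\kappa)}{\cos^4\theta}$; (3) if $\kappa>1$ and $0\le\sin\theta\le1/\kappa$: $\eta=10\log_{10}\frac{1+\sin^2\theta}{(1-\sin\theta)^2}$; (4) if $\kappa>1$ and $1/\kappa<\sin\theta<1$: $\eta=10\log_{10}\frac{(1+\sin^2\theta)(1/\kappa+\sin^2\theta)(1+\kappa)}{\cos^4\theta}$.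
   Context: $\mathbf{A}=\mathbf{h}_1\mathbf{h}_1^H-\mathbf{h}_2\mathbf{h}_2^H=\mathbf{V}\,\mathrm{diag}(\lambda_1,-\lambda_2,0,\dots,0)\mathbf{V}^H$ with $\mathbf{V}$ unitary and $\lambda_1,\lambda_2>0$; $\tilde h_{1,1}$ is the first entry of $\mathbf{V}^H\mathbf{h}_1$ and $\theta=\arccos\frac{\sqrt{\lambda_1}}{|\tilde h_{1,1}|}\in[0,\pi/2)$. With $\mathbf{H}=[\mathbf{h}_1\ \mathbf{h}_2]$ and $\mu_1,\mu_2$ the eigenvalues of $\mathbf{H}^H\mathbf{H}$: $\mathrm{SNR}_{\rm zf}=\frac{P}{\sigma^2\sum_{i=1}^2[(\mathbf{H}^H\mathbf{H})^{-1}]_{i,i}}=\frac{P\mu_1\mu_2}{\sigma^2(\mu_1+\mu_2)}$, and $\mathrm{SNR}_{\rm md}=\frac{1}{\sigma^2}\max_{\mathbf{w}\in\mathbb{C}^M,\ \|\mathbf{w}\|^2=P}\min\{|\mathbf{h}_1^H\mathbf{w}|^2,|\mathbf{h}_2^H\mathbf{w}|^2\}$. *)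

(* Defs.v *)
From Stdlib Require Import Reals Lra.
Open Scope R_scope.

Definition Cplx : Type := (R * R)%type.
Definition C0 : Cplx := (0, 0).
Definition RtoC (x : R) : Cplx := (x, 0).
Definition Cadd (z w : Cplx) : Cplx := (fst z + fst w, snd z + snd w).
Definition Cmul (z w : Cplx) : Cplx :=
  (fst z * fst w - snd z * snd w, fst z * snd w + snd z * fst w).
Definition Cconj (z : Cplx) : Cplx := (fst z, - snd z).
Definition Cnorm2 (z : Cplx) : R := fst z * fst z + snd z * snd z.
Definition Cmod (z : Cplx) : R := sqrt (Cnorm2 z).

Fixpoint Csum (n : nat) (f : nat -> Cplx) : Cplx :=
  match n with
  | O => C0
  | S n' => Cadd (Csum n' f) (f n')
  end.

(* a vector of Cplx^M is a function nat -> Cplx, of which only indices k < M matter;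
   a matrix is a function nat -> nat -> Cplx (row, column). *)

Definition inner (M : nat) (x y : nat -> Cplx) : Cplx :=
  Csum M (fun k => Cmul (Cconj (x k)) (y k)).

Definition vnorm2 (M : nat) (w : nat -> Cplx) : R := fst (inner M w w).

Definition lin_indep2 (M : nat) (h1 h2 : nat -> Cplx) : Prop :=
  forall a b : Cplx,
    (forall k, (k < M)%nat -> Cadd (Cmul a (h1 k)) (Cmul b (h2 k)) = C0) ->
    a = C0 /\ b = C0.

Definition kron (i j : nat) : Cplx := if Nat.eqb i j then RtoC 1 else C0.

Definition unitary (M : nat) (V : nat -> nat -> Cplx) : Prop :=
  (forall i j, (i < M)%nat -> (j < M)%nat ->
     Csum M (fun k => Cmul (Cconj (V k i)) (V k j)) = kron i j) /\
  (forall i j, (i < M)%nat -> (j < M)%nat ->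
     Csum M (fun k => Cmul (V i k) (Cconj (V j k))) = kron i j).

Definition dval (l1 l2 : R) (k : nat) : R :=
  match k with
  | O => l1
  | S O => - l2
  | _ => 0
  end.

(* A = h1 h1^H - h2 h2^H = V diag(l1, -l2, 0, ..., 0) V^H, entrywise *)
Definition eig_decomp (M : nat) (h1 h2 : nat -> Cplx) (V : nat -> nat -> Cplx)
    (l1 l2 : R) : Prop :=
  forall i j, (i < M)%nat -> (j < M)%nat ->
    Cadd (Cmul (h1 i) (Cconj (h1 j))) (Cmul (RtoC (-1)) (Cmul (h2 i) (Cconj (h2 j))))
    = Csum M (fun k => Cmul (V i k) (Cmul (RtoC (dval l1 l2 k)) (Cconj (V j k)))).

Definition htilde11 (M : nat) (h1 : nat -> Cplx) (V : nat -> nat -> Cplx) : Cplx :=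
  Csum M (fun k => Cmul (Cconj (V k O)) (h1 k)).

Definition theta (M : nat) (h1 : nat -> Cplx) (V : nat -> nat -> Cplx) (l1 : R) : R :=
  acos (sqrt l1 / Cmod (htilde11 M h1 V)).

(* Gram matrix H^H H = [[g11, g12], [g21, g22]] for H = [h1 h2] *)
Definition g11 M (h1 h2 : nat -> Cplx) : R := vnorm2 M h1.
Definition g22 M (h1 h2 : nat -> Cplx) : R := vnorm2 M h2.
Definition gdet M (h1 h2 : nat -> Cplx) : R :=
  g11 M h1 h2 * g22 M h1 h2 - Cnorm2 (inner M h1 h2).
(* diagonal entries of (H^H H)^{-1} (2x2 inverse: adjugate / determinant) *)
Definition ginv11 M (h1 h2 : nat -> Cplx) : R := g22 M h1 h2 / gdet M h1 h2.
Definition ginv22 M (h1 h2 : nat -> Cplx) : R := g11 M h1 h2 / gdet M h1 h2.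

Definition SNR_zf M (h1 h2 : nat -> Cplx) (P sigma2 : R) : R :=
  P / (sigma2 * (ginv11 M h1 h2 + ginv22 M h1 h2)).

Definition md_obj M (h1 h2 : nat -> Cplx) (sigma2 : R) (w : nat -> Cplx) : R :=
  / sigma2 * Rmin (Cnorm2 (inner M h1 w)) (Cnorm2 (inner M h2 w)).

Definition is_SNR_md M (h1 h2 : nat -> Cplx) (P sigma2 : R) (s : R) : Prop :=
  (exists w, vnorm2 M w = P /\ md_obj M h1 h2 sigma2 w = s) /\
  (forall w, vnorm2 M w = P -> md_obj M h1 h2 sigma2 w <= s).

Definition log10 (x : R) : R := ln x / ln 10.

(* Main.v *)
Require Import Defs.
From Stdlib Require Import Reals Lra Psatz Lia.
Open Scope R_scope.

Definition Cone : Cplx := (1, 0).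
Definition Copp (z : Cplx) : Cplx := (- fst z, - snd z).
Definition Csub (z w : Cplx) : Cplx := Cadd z (Copp w).

Lemma Cpair_eq (a b c d : R) : a = c -> b = d -> (a, b) = (c, d).
Proof. intros; subst; reflexivity. Qed.

Lemma Cring : ring_theory C0 Cone Cadd Cmul Csub Copp (@eq Cplx).
Proof.
  constructor; intros;
  repeat match goal with z : Cplx |- _ => destruct z end;
  unfold C0, Cone, Cadd, Cmul, Csub, Copp; cbn [fst snd]; apply Cpair_eq; simpl; ring.
Qed.
Add Ring Cring : Cring.

Ltac cdes := repeat match goal with z : Cplx |- _ => destruct z end.
Ltac csolve := cdes; unfold C0, Cone, Cadd, Cmul, Csub, Copp, Cconj, RtoC; simpl;
  apply Cpair_eq; ring.

Lemma Cconj_add z w : Cconj (Cadd z w) = Cadd (Cconj z) (Cconj w).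
Proof. csolve. Qed.
Lemma Cconj_mul z w : Cconj (Cmul z w) = Cmul (Cconj z) (Cconj w).
Proof. csolve. Qed.
Lemma Cconj_conj z : Cconj (Cconj z) = z.
Proof. csolve. Qed.
Lemma Cconj_C0 : Cconj C0 = C0.
Proof. csolve. Qed.
Lemma Cconj_RtoC r : Cconj (RtoC r) = RtoC r.
Proof. unfold Cconj, RtoC; simpl; apply Cpair_eq; ring. Qed.

Lemma Csum_ext n f g : (forall k, (k < n)%nat -> f k = g k) -> Csum n f = Csum n g.
Proof.
  induction n; intros H; simpl; auto.
  rewrite IHn, H; auto.
Qed.

Lemma Csum_add n f g : Csum n (fun k => Cadd (f k) (g k)) = Cadd (Csum n f) (Csum n g).
Proof. induction n; simpl. csolve. rewrite IHn; ring. Qed.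

Lemma Csum_scal n c f : Csum n (fun k => Cmul c (f k)) = Cmul c (Csum n f).
Proof. induction n; simpl. csolve. rewrite IHn; ring. Qed.

Lemma Csum_scalr n c f : Csum n (fun k => Cmul (f k) c) = Cmul (Csum n f) c.
Proof. induction n; simpl. csolve. rewrite IHn; ring. Qed.

Lemma Csum_conj n f : Cconj (Csum n f) = Csum n (fun k => Cconj (f k)).
Proof. induction n; simpl. csolve. rewrite Cconj_add, IHn; auto. Qed.

Lemma Csum_zero n : Csum n (fun _ => C0) = C0.
Proof. induction n; simpl; auto. rewrite IHn; csolve. Qed.

Lemma Csum_swap n m (f : nat -> nat -> Cplx) :
  Csum n (fun i => Csum m (fun j => f i j)) = Csum m (fun j => Csum n (fun i => f i j)).
Proof.
  induction n; simpl.
  - rewrite Csum_zero; auto.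
  - rewrite IHn, <- Csum_add; auto.
Qed.

Lemma Csum_kron n j f : (j < n)%nat -> Csum n (fun k => Cmul (f k) (kron k j)) = f j.
Proof.
  induction n; intros Hj; [lia|]. simpl.
  destruct (Nat.eq_dec j n) as [->|Hne].
  - rewrite (Csum_ext n _ (fun _ => C0)).
    + rewrite Csum_zero. unfold kron. rewrite Nat.eqb_refl. destruct (f n); csolve.
    + intros k Hk. unfold kron. replace (Nat.eqb k n) with false. destruct (f k); csolve.
      symmetry; apply Nat.eqb_neq; lia.
  - rewrite IHn by lia. unfold kron. replace (Nat.eqb n j) with false. destruct (f n), (f j); csolve.
    symmetry; apply Nat.eqb_neq; lia.
Qed.

Lemma Csum_kron' n j f : (j < n)%nat -> Csum n (fun k => Cmul (kron j k) (f k)) = f j.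
Proof.
  intros Hj. rewrite <- (Csum_kron n j f Hj). apply Csum_ext. intros k _.
  unfold kron. rewrite Nat.eqb_sym. ring.
Qed.

Lemma inner_conj M x y : inner M y x = Cconj (inner M x y).
Proof. unfold inner. rewrite Csum_conj. apply Csum_ext; intros; csolve. Qed.

Lemma inner_addr M x y z : inner M x (fun k => Cadd (y k) (z k)) = Cadd (inner M x y) (inner M x z).
Proof. unfold inner. rewrite <- Csum_add. apply Csum_ext; intros; ring. Qed.

Lemma inner_scalr M x c y : inner M x (fun k => Cmul c (y k)) = Cmul c (inner M x y).
Proof. unfold inner. rewrite <- Csum_scal. apply Csum_ext; intros; ring. Qed.

Lemma inner_addl M x y z : inner M (fun k => Cadd (y k) (z k)) x = Cadd (inner M y x) (inner M z x).
Proof. rewrite !(inner_conj M x), inner_addr, Cconj_add; auto. Qed.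

Lemma inner_scall M x c y : inner M (fun k => Cmul c (y k)) x = Cmul (Cconj c) (inner M y x).
Proof. rewrite !(inner_conj M x), inner_scalr, Cconj_mul; auto. Qed.

Lemma inner_self0 M x : snd (inner M x x) = 0 /\ 0 <= fst (inner M x x).
Proof.
  unfold inner. induction M; simpl.
  - split; lra.
  - destruct IHM as [H1 H2]. destruct (x M) as [a b]. simpl. split; nra.
Qed.

Lemma inner_self M x : inner M x x = (vnorm2 M x, 0) /\ 0 <= vnorm2 M x.
Proof.
  destruct (inner_self0 M x) as [H1 H2]. unfold vnorm2. split; auto.
  destruct (inner M x x); simpl in *; subst; auto.
Qed.

Definition vadd (x y : nat -> Cplx) : nat -> Cplx := fun k => Cadd (x k) (y k).
Definition vscal (c : Cplx) (x : nat -> Cplx) : nat -> Cplx := fun k => Cmul c (x k).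

Lemma inner_vaddr M x y z : inner M x (vadd y z) = Cadd (inner M x y) (inner M x z).
Proof. apply inner_addr. Qed.
Lemma inner_vaddl M x y z : inner M (vadd y z) x = Cadd (inner M y x) (inner M z x).
Proof. apply inner_addl. Qed.
Lemma inner_vscalr M x c y : inner M x (vscal c y) = Cmul c (inner M x y).
Proof. apply inner_scalr. Qed.
Lemma inner_vscall M x c y : inner M (vscal c y) x = Cmul (Cconj c) (inner M y x).
Proof. apply inner_scall. Qed.

Lemma Cnorm2_mul a b : Cnorm2 (Cmul a b) = Cnorm2 a * Cnorm2 b.
Proof. destruct a, b; unfold Cnorm2, Cmul; simpl; ring. Qed.
Lemma Cnorm2_conj a : Cnorm2 (Cconj a) = Cnorm2 a.
Proof. destruct a; unfold Cnorm2, Cconj; simpl; ring. Qed.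
Lemma Cnorm2_ge0 a : 0 <= Cnorm2 a.
Proof. destruct a; unfold Cnorm2; simpl; nra. Qed.
Lemma fst_le_mod z : fst z <= sqrt (Cnorm2 z).
Proof.
  destruct z as [a b]; unfold Cnorm2; simpl.
  destruct (Rle_dec a 0). { pose proof (sqrt_pos (a*a+b*b)); lra. }
  rewrite <- (sqrt_square a) at 1 by lra. apply sqrt_le_1_alt. nra.
Qed.

Section Gram.
Variables (M : nat) (h1 h2 : nat -> Cplx).
Let G := inner M h1 h2.

Lemma bessel w :
  0 < gdet M h1 h2 ->
  g22 M h1 h2 * Cnorm2 (inner M h1 w) + g11 M h1 h2 * Cnorm2 (inner M h2 w)
   - 2 * fst (Cmul (Cmul (Cconj (inner M h1 w)) G) (inner M h2 w))
  <= gdet M h1 h2 * vnorm2 M w.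
Proof.
  intros Hd.
  set (X1 := inner M h1 w). set (X2 := inner M h2 w).
  set (gd := gdet M h1 h2).
  set (d1 := Csub (Cmul (RtoC (g22 M h1 h2)) X1) (Cmul G X2)).
  set (d2 := Csub (Cmul (RtoC (g11 M h1 h2)) X2) (Cmul (Cconj G) X1)).
  set (z := vadd (vscal (RtoC gd) w) (vadd (vscal (Copp d1) h1) (vscal (Copp d2) h2))).
  destruct (inner_self M z) as [Hz Hz0].
  assert (E : inner M z z = Cmul (RtoC gd) (RtoC (gd * vnorm2 M w -
     (g22 M h1 h2 * Cnorm2 X1 + g11 M h1 h2 * Cnorm2 X2
      - 2 * fst (Cmul (Cmul (Cconj X1) G) X2))))).
  { unfold z. rewrite !inner_vaddl, !inner_vaddr, !inner_vscall, !inner_vscalr.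
    rewrite (inner_conj M h1 w), (inner_conj M h2 w), (inner_conj M h1 h2).
    fold X1 X2 G.
    destruct (inner_self M w) as [-> _]. destruct (inner_self M h1) as [-> _].
    destruct (inner_self M h2) as [-> _].
    unfold gd, gdet, d1, d2, g11, g22. fold G.
    generalize (vnorm2 M w) (vnorm2 M h1) (vnorm2 M h2). intros N a b.
    clearbody X1 X2 G. destruct X1, X2, G.
    unfold Cnorm2, Cmul, Cconj, Cadd, RtoC, Csub, Copp; simpl. apply Cpair_eq; ring. }
  set (Q := g22 M h1 h2 * Cnorm2 X1 + g11 M h1 h2 * Cnorm2 X2
      - 2 * fst (Cmul (Cmul (Cconj X1) G) X2)) in *.
  assert (Hv : vnorm2 M z = gd * (gd * vnorm2 M w - Q)).
  { change (vnorm2 M z) with (fst (vnorm2 M z, 0)). rewrite <- Hz, E.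
    unfold Cmul, RtoC; simpl; ring. }
  fold gd in Hd. rewrite Hv in Hz0.
  assert (0 <= gd * vnorm2 M w - Q).
  { destruct (Rle_dec 0 (gd * vnorm2 M w - Q)); auto. exfalso. nra. }
  lra.
Qed.
End Gram.

Lemma real_a g11 g22 ga R1 R2 P :
  0 < g11 -> 0 < g22 -> 0 <= ga -> ga <= g11 -> ga <= g22 -> 0 < g11*g22 - ga*ga ->
  0 <= R1 -> 0 <= R2 ->
  g22*(R1*R1) + g11*(R2*R2) - 2*ga*R1*R2 <= (g11*g22 - ga*ga)*P ->
  Rmin (R1*R1) (R2*R2) <= (g11*g22 - ga*ga)*P/(g11+g22-2*ga).
Proof.
  intros H1 H2 H3 H4 H5 H6 H7 H8 H9.
  assert (Hs : 0 < g11+g22-2*ga) by nra.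
  apply Rmult_le_reg_r with (g11+g22-2*ga); auto.
  unfold Rdiv. rewrite Rmult_assoc, Rinv_l, Rmult_1_r by lra.
  unfold Rmin; destruct (Rle_dec (R1*R1) (R2*R2)).
  - assert (R1 <= R2) by nra.
    assert (0 <= (R2-R1)*(g11*(R2-R1) + 2*R1*(g11-ga))).
    { apply Rmult_le_pos; nra. }
    nra.
  - assert (R2 <= R1) by nra.
    assert (0 <= (R1-R2)*(g22*(R1-R2) + 2*R2*(g22-ga))).
    { apply Rmult_le_pos; nra. }
    nra.
Qed.

Lemma real_b g11 g22 ga R1 R2 P :
  0 < g11 -> 0 < g11*g22 - ga*ga ->
  g22*(R1*R1) + g11*(R2*R2) - 2*ga*R1*R2 <= (g11*g22 - ga*ga)*P ->
  R1*R1 <= P*g11.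
Proof.
  intros H1 H2 H3.
  assert (E : g11*(g22*(R1*R1) + g11*(R2*R2) - 2*ga*R1*R2) =
     (g11*R2 - ga*R1)^2 + (R1*R1)*(g11*g22-ga*ga)) by ring.
  assert (g11*((g11*g22 - ga*ga)*P) >= (R1*R1)*(g11*g22-ga*ga)).
  { assert (0 <= (g11*R2 - ga*R1)^2) by (apply pow2_ge_0). nra. }
  nra.
Qed.

Lemma sq_sqrt x : 0 <= x -> sqrt x * sqrt x = x.
Proof. apply sqrt_sqrt. Qed.

Lemma E_bound M h1 h2 w : 0 < gdet M h1 h2 ->
  g22 M h1 h2 * (sqrt (Cnorm2 (inner M h1 w)) * sqrt (Cnorm2 (inner M h1 w)))
  + g11 M h1 h2 * (sqrt (Cnorm2 (inner M h2 w)) * sqrt (Cnorm2 (inner M h2 w)))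
  - 2 * sqrt (Cnorm2 (inner M h1 h2)) * sqrt (Cnorm2 (inner M h1 w)) * sqrt (Cnorm2 (inner M h2 w))
  <= gdet M h1 h2 * vnorm2 M w.
Proof.
  intros Hd. pose proof (bessel M h1 h2 w Hd) as B.
  rewrite !sq_sqrt by apply Cnorm2_ge0.
  set (X1 := inner M h1 w) in *. set (X2 := inner M h2 w) in *. set (G := inner M h1 h2) in *.
  assert (fst (Cmul (Cmul (Cconj X1) G) X2) <= sqrt (Cnorm2 G) * sqrt (Cnorm2 X1) * sqrt (Cnorm2 X2)).
  { eapply Rle_trans. apply fst_le_mod.
    rewrite !Cnorm2_mul, Cnorm2_conj, !sqrt_mult; try apply Cnorm2_ge0;
      try (apply Rmult_le_pos; apply Cnorm2_ge0). lra. }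
  lra.
Qed.

Lemma exists_e G : exists e, Cnorm2 e = 1 /\ Cmul e G = RtoC (sqrt (Cnorm2 G)).
Proof.
  destruct (Req_dec (Cnorm2 G) 0) as [H0|H0].
  - exists (1, 0). destruct G as [a b]. unfold Cnorm2 in *; simpl in *.
    assert (a = 0) by nra. assert (b = 0) by nra. subst.
    unfold Cmul, RtoC; simpl. split. ring. rewrite Rmult_0_l, Rplus_0_l, sqrt_0.
    apply Cpair_eq; ring.
  - pose proof (Cnorm2_ge0 G) as Hp.
    assert (Hs : 0 < sqrt (Cnorm2 G)) by (apply sqrt_lt_R0; lra).
    pose proof (sq_sqrt _ Hp) as Hss.
    destruct G as [a b]. unfold Cnorm2 in *; simpl in *.
    set (s := sqrt (a*a+b*b)) in *. clearbody s.
    exists (a / s, - b / s).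
    unfold Cmul, RtoC; simpl. split.
    + transitivity ((a*a+b*b)/(s*s)). field. lra. rewrite Hss. field. lra.
    + apply Cpair_eq.
      * transitivity ((a*a+b*b)/s). field. lra. rewrite <- Hss. field. lra.
      * field. lra.
Qed.

Section Attain.
Variables (M : nat) (h1 h2 : nat -> Cplx) (e : Cplx) (t1 t2 : R).
Hypothesis He : Cnorm2 e = 1.
Hypothesis HeG : Cmul e (inner M h1 h2) = RtoC (sqrt (Cnorm2 (inner M h1 h2))).
Let ga := sqrt (Cnorm2 (inner M h1 h2)).
Let w := vadd (vscal (RtoC t1) h1) (vscal (Cmul (RtoC t2) e) h2).

Lemma attain :
  Cnorm2 (inner M h1 w) = (t1 * g11 M h1 h2 + t2 * ga)^2 /\
  Cnorm2 (inner M h2 w) = (t1 * ga + t2 * g22 M h1 h2)^2 /\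
  vnorm2 M w = t1^2 * g11 M h1 h2 + t2^2 * g22 M h1 h2 + 2 * t1 * t2 * ga.
Proof.
  assert (Hg : Cnorm2 (inner M h1 h2) = ga * ga) by (unfold ga; rewrite sq_sqrt; auto; apply Cnorm2_ge0).
  assert (Hv : vnorm2 M w = fst (inner M w w)) by reflexivity. rewrite Hv.
  unfold w, g11, g22.
  rewrite !inner_vaddl, !inner_vaddr, !inner_vscall, !inner_vscalr in *.
  rewrite (inner_conj M h1 h2).
  destruct (inner_self M h1) as [-> _]. destruct (inner_self M h2) as [-> _].
  fold ga in HeG. clearbody ga. clear Hv.
  generalize (vnorm2 M h1) (vnorm2 M h2). intros a b.
  destruct e as [er ei]. destruct (inner M h1 h2) as [gr gi].
  unfold Cnorm2, Cmul, RtoC in *; simpl in *.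
  injection HeG as H1 H2.
  split; [|split].
  - transitivity ((t1*a + t2*(er*gr - ei*gi))^2 + (t2*(er*gi+ei*gr))^2). ring.
    rewrite H1, H2. ring.
  - transitivity (t1^2*(gr*gr+gi*gi) + t2^2*b^2*(er*er+ei*ei) + 2*t1*t2*b*(er*gr-ei*gi)). ring.
    rewrite H1, Hg, He. ring.
  - transitivity (t1^2*a + 2*t1*t2*(er*gr-ei*gi) + t2^2*(er*er+ei*ei)*b). ring.
    rewrite H1, He. ring.
Qed.
End Attain.

Lemma SNR_md_unique M h1 h2 P s2 a b :
  is_SNR_md M h1 h2 P s2 a -> is_SNR_md M h1 h2 P s2 b -> a = b.
Proof.
  intros [[w1 [H1 E1]] U1] [[w2 [H2 E2]] U2].
  specialize (U1 w2 H2). specialize (U2 w1 H1). lra.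
Qed.

Section MD.
Variables (M : nat) (h1 h2 : nat -> Cplx) (P s2 : R).
Hypothesis HP : 0 < P.
Hypothesis Hs2 : 0 < s2.
Hypothesis Hd : 0 < gdet M h1 h2.
Local Notation a := (g11 M h1 h2).
Local Notation b := (g22 M h1 h2).
Local Notation ga := (sqrt (Cnorm2 (inner M h1 h2))).

Lemma gfacts : gdet M h1 h2 = a*b - ga*ga /\ 0 <= ga /\ 0 < a /\ 0 < b.
Proof.
  assert (Hg : ga*ga = Cnorm2 (inner M h1 h2)) by (apply sq_sqrt, Cnorm2_ge0).
  assert (E : gdet M h1 h2 = a*b - ga*ga) by (unfold gdet; rewrite Hg; reflexivity).
  assert (0 <= ga) by apply sqrt_pos.
  destruct (inner_self M h1) as [_ Ha']. destruct (inner_self M h2) as [_ Hb'].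
  change (vnorm2 M h1) with a in Ha'. change (vnorm2 M h2) with b in Hb'.
  rewrite E in Hd. clear Hg.
  assert (Hab : 0 < a*b) by nra.
  repeat split; try lra.
  - destruct (Rle_lt_dec a 0); auto. assert (Hz : a = 0) by lra. rewrite Hz, Rmult_0_l in Hab. lra.
  - destruct (Rle_lt_dec b 0); auto. assert (Hz : b = 0) by lra. rewrite Hz, Rmult_0_r in Hab. lra.
Qed.

Lemma upper w : vnorm2 M w = P ->
  let R1 := sqrt (Cnorm2 (inner M h1 w)) in
  let R2 := sqrt (Cnorm2 (inner M h2 w)) in
  b*(R1*R1) + a*(R2*R2) - 2*ga*R1*R2 <= (a*b - ga*ga)*P /\ 0 <= R1 /\ 0 <= R2 /\
  md_obj M h1 h2 s2 w = / s2 * Rmin (R1*R1) (R2*R2).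
Proof.
  intros Hw R1 R2. destruct gfacts as [Hg _].
  pose proof (E_bound M h1 h2 w Hd) as E. rewrite Hw, Hg in E.
  split; [fold R1 R2 in E; lra|]. split; [apply sqrt_pos|]. split; [apply sqrt_pos|].
  unfold md_obj, R1, R2. rewrite !sq_sqrt by apply Cnorm2_ge0. reflexivity.
Qed.

Lemma md_a : ga <= a -> ga <= b ->
  is_SNR_md M h1 h2 P s2 (/ s2 * ((a*b - ga*ga)*P/(a+b-2*ga))).
Proof.
  intros Ha Hb. destruct gfacts as [Hg [Hga0 [Ha0 Hb0]]].
  assert (HS : 0 < a+b-2*ga) by nra.
  assert (Hgd : 0 < a*b - ga*ga) by nra.
  split.
  - destruct (exists_e (inner M h1 h2)) as [e [He HeG]].
    set (k := sqrt (P / ((a*b-ga*ga)*(a+b-2*ga)))).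
    assert (Hk : k*k = P / ((a*b-ga*ga)*(a+b-2*ga))).
    { apply sq_sqrt. apply Rlt_le, Rdiv_lt_0_compat; nra. }
    destruct (attain M h1 h2 e (k*(b-ga)) (k*(a-ga)) He HeG) as [A1 [A2 A3]].
    eexists. split.
    + rewrite A3.
      transitivity (k*k*((a*b-ga*ga)*(a+b-2*ga))). ring.
      rewrite Hk. field. split; lra.
    + unfold md_obj. rewrite A1, A2.
      replace ((k * (b - ga) * a + k * (a - ga) * ga) ^ 2) with (k*k*(a*b-ga*ga)^2) by ring.
      replace ((k * (b - ga) * ga + k * (a - ga) * b) ^ 2) with (k*k*(a*b-ga*ga)^2) by ring.
      rewrite Rmin_left by lra. rewrite Hk. f_equal. field. split; lra.
  - intros w Hw. destruct (upper w Hw) as [E [H1 [H2 ->]]].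
    apply Rmult_le_compat_l. left; apply Rinv_0_lt_compat; lra.
    apply real_a; auto; lra.
Qed.
Lemma md_b : a <= ga -> a <= b -> is_SNR_md M h1 h2 P s2 (/ s2 * (P*a)).
Proof.
  intros Ha Hb. destruct gfacts as [Hg [Hga0 [Ha0 Hb0]]].
  assert (Hgd : 0 < a*b - ga*ga) by (rewrite <- Hg; exact Hd).
  split.
  - destruct (exists_e (inner M h1 h2)) as [e [He HeG]].
    set (k := sqrt (P / a)).
    assert (Hk : k*k = P / a).
    { apply sq_sqrt. apply Rlt_le, Rdiv_lt_0_compat; nra. }
    destruct (attain M h1 h2 e k 0 He HeG) as [A1 [A2 A3]].
    eexists. split.
    + rewrite A3. transitivity (k*k*a). ring. rewrite Hk. field. lra.
    + unfold md_obj. rewrite A1, A2.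
      replace ((k * a + 0 * ga) ^ 2) with (k*k*a*a) by ring.
      replace ((k * ga + 0 * b) ^ 2) with (k*k*ga*ga) by ring.
      rewrite Hk. rewrite Rmin_left.
      * f_equal. field. lra.
      * rewrite !Rmult_assoc. apply Rmult_le_compat_l. apply Rlt_le, Rdiv_lt_0_compat; lra. nra.
  - intros w Hw. destruct (upper w Hw) as [E [H1 [H2 ->]]].
    apply Rmult_le_compat_l. left; apply Rinv_0_lt_compat; lra.
    eapply Rle_trans. apply Rmin_l. eapply real_b; eauto.
Qed.

Lemma md_c : b <= ga -> b <= a -> is_SNR_md M h1 h2 P s2 (/ s2 * (P*b)).
Proof.
  intros Ha Hb. destruct gfacts as [Hg [Hga0 [Ha0 Hb0]]].
  assert (Hgd : 0 < a*b - ga*ga) by (rewrite <- Hg; exact Hd).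
  split.
  - destruct (exists_e (inner M h1 h2)) as [e [He HeG]].
    set (k := sqrt (P / b)).
    assert (Hk : k*k = P / b).
    { apply sq_sqrt. apply Rlt_le, Rdiv_lt_0_compat; nra. }
    destruct (attain M h1 h2 e 0 k He HeG) as [A1 [A2 A3]].
    eexists. split.
    + rewrite A3. transitivity (k*k*b). ring. rewrite Hk. field. lra.
    + unfold md_obj. rewrite A1, A2.
      replace ((0 * a + k * ga) ^ 2) with (k*k*ga*ga) by ring.
      replace ((0 * ga + k * b) ^ 2) with (k*k*b*b) by ring.
      rewrite Hk. rewrite Rmin_right.
      * f_equal. field. lra.
      * rewrite !Rmult_assoc. apply Rmult_le_compat_l. apply Rlt_le, Rdiv_lt_0_compat; lra. nra.
  - intros w Hw. destruct (upper w Hw) as [E [H1 [H2 ->]]].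
    apply Rmult_le_compat_l. left; apply Rinv_0_lt_compat; lra.
    eapply Rle_trans. apply Rmin_r. apply (real_b b a ga _ (sqrt (Cnorm2 (inner M h1 w)))); try lra.
Qed.
End MD.

Lemma M_ge2 M h1 h2 : lin_indep2 M h1 h2 -> (2 <= M)%nat.
Proof.
  intros H. destruct M as [|[|M]].
  - destruct (H (1,0) C0) as [E _]. intros k Hk; lia.
    unfold C0 in E. injection E. lra.
  - destruct (H (h2 O) (Copp (h1 O))) as [E1 E2].
    { intros k Hk. assert (k = O) by lia. subst. csolve. }
    destruct (H (1,0) C0) as [E _].
    { intros k Hk. assert (k = O) by lia. subst.
      assert (Hz : h1 O = C0).
      { destruct (h1 O) as [p q], (h2 O) as [r t]. unfold Copp, C0 in *; simpl in *.
        injection E2 as Ep Eq. f_equal; lra. }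
      rewrite Hz. csolve. }
    unfold C0 in E. injection E. lra.
  - lia.
Qed.

Definition col (V : nat -> nat -> Cplx) (k : nat) : nat -> Cplx := fun i => V i k.

Lemma Aform_h M h1 h2 x y :
  Csum M (fun i => Cmul (Cconj (x i)) (Csum M (fun j =>
     Cmul (Cadd (Cmul (h1 i) (Cconj (h1 j))) (Cmul (RtoC (-1)) (Cmul (h2 i) (Cconj (h2 j))))) (y j))))
  = Cadd (Cmul (inner M x h1) (inner M h1 y)) (Cmul (RtoC (-1)) (Cmul (inner M x h2) (inner M h2 y))).
Proof.
  rewrite (Csum_ext M _ (fun i => Cadd (Cmul (Cmul (Cconj (x i)) (h1 i)) (inner M h1 y))
     (Cmul (RtoC (-1)) (Cmul (Cmul (Cconj (x i)) (h2 i)) (inner M h2 y))))).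
  - rewrite Csum_add, Csum_scal, !Csum_scalr. reflexivity.
  - intros i _. unfold inner.
    rewrite (Csum_ext M _ (fun j => Cadd (Cmul (h1 i) (Cmul (Cconj (h1 j)) (y j)))
       (Cmul (Cmul (RtoC (-1)) (h2 i)) (Cmul (Cconj (h2 j)) (y j))))).
    + rewrite Csum_add, !Csum_scal. ring.
    + intros j _. ring.
Qed.

Lemma Aform_V M (V : nat -> nat -> Cplx) (d : nat -> R) x y :
  Csum M (fun i => Cmul (Cconj (x i)) (Csum M (fun j =>
     Cmul (Csum M (fun k => Cmul (V i k) (Cmul (RtoC (d k)) (Cconj (V j k))))) (y j))))
  = Csum M (fun k => Cmul (RtoC (d k)) (Cmul (inner M x (col V k)) (inner M (col V k) y))).
Proof.
  rewrite (Csum_ext M _ (fun i => Csum M (fun k =>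
      Cmul (Cmul (Cconj (x i)) (V i k)) (Cmul (RtoC (d k)) (inner M (col V k) y))))).
  - rewrite Csum_swap. apply Csum_ext. intros k _.
    rewrite Csum_scalr. unfold inner at 2. unfold col. ring.
  - intros i _.
    rewrite (Csum_ext M _ (fun j => Csum M (fun k =>
       Cmul (Cmul (V i k) (RtoC (d k))) (Cmul (Cconj (V j k)) (y j))))).
    + rewrite Csum_swap, <- Csum_scal. apply Csum_ext. intros k _. unfold inner, col.
      rewrite Csum_scal. ring.
    + intros j _. rewrite <- Csum_scalr. apply Csum_ext. intros k _. ring.
Qed.

Lemma eig_eq M h1 h2 V l1 l2 x m : unitary M V -> eig_decomp M h1 h2 V l1 l2 -> (m < M)%nat ->
  Cadd (Cmul (inner M x h1) (inner M h1 (col V m)))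
       (Cmul (RtoC (-1)) (Cmul (inner M x h2) (inner M h2 (col V m))))
  = Cmul (RtoC (dval l1 l2 m)) (inner M x (col V m)).
Proof.
  intros [U1 _] E Hm.
  rewrite <- Aform_h.
  rewrite (Csum_ext M _ (fun i => Cmul (Cconj (x i)) (Csum M (fun j =>
     Cmul (Csum M (fun k => Cmul (V i k) (Cmul (RtoC (dval l1 l2 k)) (Cconj (V j k))))) (col V m j))))).
  - rewrite Aform_V.
    rewrite (Csum_ext M _ (fun k => Cmul (Cmul (RtoC (dval l1 l2 k)) (inner M x (col V k))) (kron k m))).
    + apply Csum_kron; auto.
    + intros k Hk. unfold inner at 2. unfold col at 2 3. rewrite U1 by auto. ring.
  - intros i Hi. f_equal. apply Csum_ext. intros j Hj. rewrite E by auto. reflexivity.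
Qed.

Lemma eig_comp M h1 h2 V l1 l2 m : unitary M V -> eig_decomp M h1 h2 V l1 l2 -> (m < M)%nat ->
  let la := dval l1 l2 m in
  let a := g11 M h1 h2 in let b := g22 M h1 h2 in
  let p := fst (inner M h1 (col V m)) in let q := snd (inner M h1 (col V m)) in
  let r := fst (inner M h2 (col V m)) in let t := snd (inner M h2 (col V m)) in
  let u := fst (inner M h1 h2) in let v := snd (inner M h1 h2) in
  (a - la) * p = u * r - v * t /\ (a - la) * q = u * t + v * r /\
  u * p + v * q = (b + la) * r /\ u * q - v * p = (b + la) * t /\
  p*p + q*q - (r*r + t*t) = la.
Proof.
  intros HU HE Hm la a b p q r t u v.
  pose proof (eig_eq M h1 h2 V l1 l2 h1 m HU HE Hm) as E1.
  pose proof (eig_eq M h1 h2 V l1 l2 h2 m HU HE Hm) as E2.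
  pose proof (eig_eq M h1 h2 V l1 l2 (col V m) m HU HE Hm) as E3.
  fold la in E1, E2, E3.
  rewrite (inner_conj M h1 h2) in E2.
  rewrite (inner_conj M h1 (col V m)), (inner_conj M h2 (col V m)) in E3.
  assert (K : inner M (col V m) (col V m) = Cone).
  { destruct HU as [U1 _]. unfold inner, col. rewrite U1 by auto. unfold kron.
    rewrite Nat.eqb_refl. reflexivity. }
  rewrite K in E3.
  destruct (inner_self M h1) as [Ha _]. destruct (inner_self M h2) as [Hb _].
  rewrite Ha in E1. rewrite Hb in E2. fold a in E1. fold b in E2.
  unfold p, q, r, t, u, v.
  destruct (inner M h1 (col V m)) as [p' q'], (inner M h2 (col V m)) as [r' t'],
    (inner M h1 h2) as [u' v'].
  unfold Cadd, Cmul, Cconj, RtoC, Cone in *; simpl in *.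
  injection E1 as E1a E1b. injection E2 as E2a E2b. injection E3 as E3a E3b.
  unfold a, b, p, q, r, t, u, v in *. clearbody la. unfold g11, g22 in *. repeat split; nra.
Qed.

Lemma f_zero a b la p q r t u v :
  (a - la) * p = u * r - v * t -> (a - la) * q = u * t + v * r ->
  u * p + v * q = (b + la) * r -> u * q - v * p = (b + la) * t ->
  p*p + q*q - (r*r + t*t) = la -> la <> 0 ->
  (a - la) * (b + la) - (u*u + v*v) = 0 /\
  (b + la)^2 * (r*r + t*t) = (u*u+v*v) * (p*p+q*q).
Proof.
  intros H1 H2 H3 H4 H5 H6. split.
  - set (f := (a - la) * (b + la) - (u*u + v*v)).
    assert (Fr : f * r = (a-la)*((b+la)*r - (u*p+v*q)) + u*((a-la)*p - (u*r-v*t))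
                          + v*((a-la)*q - (u*t+v*r))) by (unfold f; ring).
    assert (Ft : f * t = (a-la)*((b+la)*t - (u*q-v*p)) + u*((a-la)*q - (u*t+v*r))
                          - v*((a-la)*p - (u*r-v*t))) by (unfold f; ring).
    assert (Fp : f * p = (b+la)*((a-la)*p - (u*r-v*t)) + u*((b+la)*r - (u*p+v*q))
                          - v*((b+la)*t - (u*q-v*p))) by (unfold f; ring).
    assert (Fq : f * q = (b+la)*((a-la)*q - (u*t+v*r)) + v*((b+la)*r - (u*p+v*q))
                          + u*((b+la)*t - (u*q-v*p))) by (unfold f; ring).
    rewrite H1, H2, H3, H4 in *.
    replace ((b + la) * r - (b + la) * r) with 0 in * by ring.
    replace ((b + la) * t - (b + la) * t) with 0 in * by ring.
    replace (u * r - v * t - (u * r - v * t)) with 0 in * by ring.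
    replace (u * t + v * r - (u * t + v * r)) with 0 in * by ring.
    rewrite !Rmult_0_r, !Rplus_0_r, Rminus_0_r in *.
    destruct (Req_dec f 0) as [|Hf]; auto. exfalso.
    assert (Hr : r = 0) by (apply (Rmult_eq_reg_l f); lra).
    assert (Ht : t = 0) by (apply (Rmult_eq_reg_l f); lra).
    assert (Hp : p = 0) by (apply (Rmult_eq_reg_l f); lra).
    assert (Hq : q = 0) by (apply (Rmult_eq_reg_l f); lra).
    apply H6. rewrite <- H5, Hr, Ht, Hp, Hq. ring.
  - transitivity (((b+la)*r)^2 + ((b+la)*t)^2). ring.
    rewrite <- H3, <- H4. ring.
Qed.

Lemma sq_inj x y : 0 <= x -> 0 <= y -> x*x = y*y -> x = y.
Proof. intros; apply Rsqr_inj; unfold Rsqr; auto. Qed.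

Lemma final_alg a b ga l1 l2 s : 0 < l1 -> 0 < l2 -> 0 <= s -> s < 1 ->
  a - b = l1 - l2 -> a*b - ga*ga = l1*l2 -> s*(b+l1) = ga -> 0 < b + l1 ->
  a*(1-s*s) = l1 + s*s*l2 /\ b*(1-s*s) = s*s*l1 + l2 /\ ga*(1-s*s) = s*(l1+l2).
Proof.
  intros H1 H2 H3 H4 H5 H6 H7 H8.
  set (d := a - l1).
  assert (Hb : b = d + l2) by (unfold d; lra).
  assert (Hg : ga = s*(d+l1+l2)) by (rewrite <- H7, Hb; ring).
  assert (Hd : ga*ga = d*(d+l1+l2)) by (rewrite <- (Rplus_0_r (ga*ga)); unfold d in *; nra).
  assert (E : (s*s*(d+l1+l2) - d)*(d+l1+l2) = 0) by (rewrite Hg in Hd; nra).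
  assert (Hpos : 0 < d+l1+l2) by (unfold d in *; lra).
  assert (E2 : s*s*(d+l1+l2) = d).
  { apply Rmult_integral in E. destruct E; lra. }
  unfold d in *. repeat split; nra.
Qed.

Theorem corollary1 (M : nat) (h1 h2 : nat -> Cplx) (P sigma2 : R)
    (V : nat -> nat -> Cplx) (l1 l2 : R) :
  lin_indep2 M h1 h2 -> 0 < P -> 0 < sigma2 ->
  unitary M V -> 0 < l1 -> 0 < l2 -> eig_decomp M h1 h2 V l1 l2 ->
  let kappa := l1 / l2 in
  let th := theta M h1 V l1 in
  exists snr_md : R,
    is_SNR_md M h1 h2 P sigma2 snr_md /\
    let eta := 10 * log10 (snr_md / SNR_zf M h1 h2 P sigma2) in
    ((0 < kappa <= 1 -> 0 <= sin th <= kappa ->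
        eta = 10 * log10 ((1 + sin th ^ 2) / (1 - sin th) ^ 2)) /\
     (0 < kappa <= 1 -> kappa < sin th < 1 ->
        eta = 10 * log10 ((1 + sin th ^ 2) * (kappa + sin th ^ 2) * (1 + 1 / kappa)
                          / cos th ^ 4)) /\
     (kappa > 1 -> 0 <= sin th <= 1 / kappa ->
        eta = 10 * log10 ((1 + sin th ^ 2) / (1 - sin th) ^ 2)) /\
     (kappa > 1 -> 1 / kappa < sin th < 1 ->
        eta = 10 * log10 ((1 + sin th ^ 2) * (1 / kappa + sin th ^ 2) * (1 + kappa)
                          / cos th ^ 4))).
Proof.
  intros Hli HP Hs2 HU Hl1 Hl2 HE kappa th.
  pose proof (M_ge2 _ _ _ Hli) as HM.
  pose proof (eig_comp M h1 h2 V l1 l2 0 HU HE ltac:(lia)) as C0'.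
  pose proof (eig_comp M h1 h2 V l1 l2 1 HU HE ltac:(lia)) as C1'.
  cbv zeta in C0', C1'. simpl dval in C0', C1'.
  set (a := g11 M h1 h2) in *. set (b := g22 M h1 h2) in *.
  set (p := fst (inner M h1 (col V 0))) in *. set (q := snd (inner M h1 (col V 0))) in *.
  set (r := fst (inner M h2 (col V 0))) in *. set (t := snd (inner M h2 (col V 0))) in *.
  set (u := fst (inner M h1 h2)) in *. set (v := snd (inner M h1 h2)) in *.
  destruct C0' as [A1 [A2 [A3 [A4 A5]]]].
  destruct C1' as [B1 [B2 [B3 [B4 B5]]]].
  destruct (f_zero a b l1 p q r t u v A1 A2 A3 A4 A5 ltac:(lra)) as [F0 S0].
  destruct (f_zero _ _ _ _ _ _ _ u v B1 B2 B3 B4 B5 ltac:(lra)) as [F1 _].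
  set (ga := sqrt (Cnorm2 (inner M h1 h2))).
  assert (Hn2 : Cnorm2 (inner M h1 h2) = u*u+v*v) by reflexivity.
  assert (Hga : ga*ga = u*u+v*v) by (unfold ga; rewrite sq_sqrt; [auto|apply Cnorm2_ge0]).
  assert (Hga0 : 0 <= ga) by apply sqrt_pos.
  assert (Hab : a - b = l1 - l2).
  { assert (E : (l1+l2)*(a-b-l1+l2) = 0) by nra.
    apply Rmult_integral in E. destruct E; lra. }
  assert (Hgd : gdet M h1 h2 = l1*l2).
  { unfold gdet. fold a b. rewrite Hn2. nra. }
  assert (Hb0 : 0 <= b) by (destruct (inner_self M h2); auto).
  set (n := p*p+q*q).
  assert (Hn : n = l1 + (r*r+t*t)) by (unfold n; lra).
  assert (Hrt : 0 <= r*r+t*t) by nra.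
  assert (Hnp : 0 < n) by lra.
  assert (Hth : th = acos (sqrt l1 / sqrt n)).
  { unfold th, theta, Cmod. change (htilde11 M h1 V) with (inner M (col V 0) h1).
    rewrite inner_conj, Cnorm2_conj. reflexivity. }
  set (x := sqrt l1 / sqrt n) in *.
  assert (Hsn : 0 < sqrt n) by (apply sqrt_lt_R0; auto).
  assert (Hx2 : x*x = l1/n).
  { unfold x. rewrite <- sqrt_div_alt by auto. apply sq_sqrt. apply Rlt_le, Rdiv_lt_0_compat; lra. }
  assert (Hx0 : 0 <= x) by (unfold x; apply Rlt_le, Rdiv_lt_0_compat; auto; apply sqrt_lt_R0; auto).
  assert (Hx1 : x <= 1).
  { unfold x. apply (Rmult_le_reg_r (sqrt n)); auto. field_simplify; [|lra].
    apply sqrt_le_1_alt. lra. }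
  assert (Hsin : sin th = sqrt (1 - x*x)) by (rewrite Hth; apply sin_acos; lra).
  assert (Hcos : cos th = x) by (rewrite Hth; apply cos_acos; lra).
  set (s := sin th) in *. set (c := cos th) in *.
  assert (Hs0 : 0 <= s) by (rewrite Hsin; apply sqrt_pos).
  assert (Hss : s*s = (r*r+t*t)/n).
  { rewrite Hsin, sq_sqrt; rewrite Hx2; [rewrite Hn; field; lra|].
    cut (l1/n <= 1); [lra|]. apply Rmult_le_reg_r with n; [lra|].
    field_simplify; lra. }
  assert (Hs1 : s < 1).
  { destruct (Rlt_le_dec s 1); auto. exfalso.
    assert (1 <= s*s) by nra. rewrite Hss in H.
    apply (Rmult_le_compat_r n) in H; [|lra]. field_simplify in H; lra. }
  assert (Hcc : c*c = 1 - s*s) by (rewrite Hcos, Hx2, Hss, Hn; field; lra).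
  assert (Hrel : s*(b+l1) = ga).
  { apply sq_inj; [nra|auto|]. rewrite Hga.
    transitivity ((b+l1)^2*(s*s)). ring. rewrite Hss.
    transitivity ((b + l1) ^ 2 * (r * r + t * t) / n). field; lra.
    rewrite S0. fold n. field. lra. }
  destruct (final_alg a b ga l1 l2 s Hl1 Hl2 Hs0 Hs1 Hab ltac:(nra) Hrel ltac:(lra))
    as [Fa [Fb Fg]].
  clear B1 B2 B3 B4 B5 F1.
  assert (Hd : 0 < gdet M h1 h2) by (rewrite Hgd; nra).
  assert (Hgd' : a*b - ga*ga = l1*l2) by nra.
  assert (Ka : ga <= a -> ga <= b -> forall S, is_SNR_md M h1 h2 P sigma2 S ->
     S = / sigma2 * ((a*b-ga*ga)*P/(a+b-2*ga))).
  { intros H1 H2 S HS. eapply SNR_md_unique; [exact HS| apply md_a; auto]. }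
  assert (Kb : a <= ga -> a <= b -> forall S, is_SNR_md M h1 h2 P sigma2 S ->
     S = / sigma2 * (P*a)).
  { intros H1 H2 S HS. eapply SNR_md_unique; [exact HS| apply md_b; auto]. }
  assert (Kc : b <= ga -> b <= a -> forall S, is_SNR_md M h1 h2 P sigma2 S ->
     S = / sigma2 * (P*b)).
  { intros H1 H2 S HS. eapply SNR_md_unique; [exact HS| apply md_c; auto]. }
  assert (Hex : exists S, is_SNR_md M h1 h2 P sigma2 S).
  { destruct (Rle_dec ga a), (Rle_dec ga b).
    - eexists; apply md_a; auto.
    - destruct (Rle_dec a b). eexists; apply md_b; auto; fold a b ga; lra. eexists; apply md_c; auto; fold a b ga; lra.
    - destruct (Rle_dec a b). eexists; apply md_b; auto; fold a b ga; lra. eexists; apply md_c; auto; fold a b ga; lra.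
    - destruct (Rle_dec a b). eexists; apply md_b; auto; fold a b ga; lra. eexists; apply md_c; auto; fold a b ga; lra. }
  destruct Hex as [S HS]. exists S. split; auto. cbv zeta.
  assert (Hzf : SNR_zf M h1 h2 P sigma2 = P/(sigma2*((a+b)/(l1*l2)))).
  { unfold SNR_zf, ginv11, ginv22. rewrite Hgd. fold a b. f_equal. f_equal. field. lra. }
  rewrite Hzf.
  assert (Hcc0 : 0 < 1 - s*s) by nra.
  assert (Ea : a = (l1 + s*s*l2)/(1-s*s)) by (rewrite <- Fa; field; lra).
  assert (Eb : b = (s*s*l1 + l2)/(1-s*s)) by (rewrite <- Fb; field; lra).
  assert (Eg : ga = s*(l1+l2)/(1-s*s)) by (rewrite <- Fg; field; lra).
  assert (Hc4 : c^4 = (1-s*s)^2) by (rewrite <- Hcc; ring).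
  rewrite Hc4. unfold kappa.
  assert (Hinv : 1 / (l1/l2) = l2/l1) by (field; lra).
  rewrite Hinv.
  repeat split.
  - intros [Hk0 Hk1] [H0 H1].
    assert (Hl : l1 <= l2) by (apply (Rmult_le_compat_r l2) in Hk1; [field_simplify in Hk1; lra|lra]).
    assert (Hsl : s*l2 <= l1) by (apply (Rmult_le_compat_r l2) in H1; [field_simplify in H1; lra|lra]).
    assert (G1 : ga <= a) by (apply (Rmult_le_reg_r (1-s*s)); auto; rewrite Fg, Fa; nra).
    assert (G2 : ga <= b) by (apply (Rmult_le_reg_r (1-s*s)); auto; rewrite Fg, Fb; nra).
    rewrite (Ka G1 G2 S HS), Hgd'. f_equal. f_equal. rewrite Ea, Eb, Eg.
    field. repeat split; try lra; nra.
  - intros [Hk0 Hk1] [H0 H1].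
    assert (Hl : l1 <= l2) by (apply (Rmult_le_compat_r l2) in Hk1; [field_simplify in Hk1; lra|lra]).
    assert (Hsl : l1 < s*l2) by (apply (Rmult_lt_compat_r l2) in H0; [field_simplify in H0; lra|lra]).
    assert (G1 : a <= ga) by (apply (Rmult_le_reg_r (1-s*s)); auto; rewrite Fg, Fa; nra).
    assert (G2 : a <= b) by lra.
    rewrite (Kb G1 G2 S HS). f_equal. f_equal. rewrite Ea, Eb.
    field. repeat split; try lra; nra.
  - intros Hk1 [H0 H1].
    assert (Hl : l2 < l1) by (unfold Rgt in Hk1; apply (Rmult_lt_compat_r l2) in Hk1; [field_simplify in Hk1; lra|lra]).
    assert (Hsl : s*l1 <= l2) by (apply (Rmult_le_compat_r l1) in H1; [field_simplify in H1; lra|lra]).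
    assert (G1 : ga <= a) by (apply (Rmult_le_reg_r (1-s*s)); auto; rewrite Fg, Fa; nra).
    assert (G2 : ga <= b) by (apply (Rmult_le_reg_r (1-s*s)); auto; rewrite Fg, Fb; nra).
    rewrite (Ka G1 G2 S HS), Hgd'. f_equal. f_equal. rewrite Ea, Eb, Eg.
    field. repeat split; try lra; nra.
  - intros Hk1 [H0 H1].
    assert (Hl : l2 < l1) by (unfold Rgt in Hk1; apply (Rmult_lt_compat_r l2) in Hk1; [field_simplify in Hk1; lra|lra]).
    assert (Hsl : l2 < s*l1) by (apply (Rmult_lt_compat_r l1) in H0; [field_simplify in H0; lra|lra]).
    assert (G1 : b <= ga) by (apply (Rmult_le_reg_r (1-s*s)); auto; rewrite Fg, Fb; nra).
    assert (G2 : b <= a) by lra.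
    rewrite (Kc G1 G2 S HS). f_equal. f_equal. rewrite Ea, Eb.
    field. repeat split; try lra; nra.
Qed.
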